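(* For every integer $n\ge 0$ with $n+k>0$ and every $x\in\mathbb{R}$, $$\Big(1-\frac{k^2}{(n+k)^2}\Big)E_n^k(x)=E_{-n}^k(-x)-\frac{k}{n+k}\,E_{-n}^k(x).$$
   Context: Fix $k\ge 0$. Partial order on $\mathbb{Z}$: $j\triangleleft n$ iff either ($|j|<|n|$ and $|n|-|j|$ is a positive even integer) or ($|j|=|n|$ and $n<j$). Let $\delta_k(x)=|2\sin x|^{2k}$ and $(f,g)_k=\frac{1}{2\pi}\int_0^{2\pi} f(x)\overline{g(x)}\delta_k(x)\,dx$. The non-symmetric Heckman–Opdam polynomials $E_n^k$, $n\in\mathbb{Z}$, are the functions on $\mathbb{R}$ of the form $E_n^k(x)=e^{nx}+\sum_{j\triangleleft n}c_{n,j}e^{jx}$ (finite sum) such that $(E_n^k(i\,\cdot),e^{ij\,\cdot})_k=0$ for all $j\triangleleft n$. *)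

(* Defs.v *)
From Stdlib Require Import Reals ZArith List.
From Coquelicot Require Import Coquelicot.
Open Scope R_scope.

Definition tri (j n : Z) : bool :=
  ((Z.abs j <? Z.abs n)%Z && Z.even (Z.abs n - Z.abs j))
  || ((Z.abs j =? Z.abs n)%Z && (n <? j)%Z).

(* The (finite) list of all j with j ◁ n; all such j satisfy |j| <= |n|. *)
Definition below (n : Z) : list Z :=
  filter (fun j => tri j n)
    (map (fun m => (Z.of_nat m - Z.abs n)%Z)
         (seq 0 (2 * Z.to_nat (Z.abs n) + 1))).

Definition Csum (l : list Z) (f : Z -> C) : C :=
  fold_right (fun j acc => Cplus (f j) acc) (RtoC 0) l.

(* a^b for a >= 0 with the convention 0^0 = 1, 0^b = 0 for b <> 0. *)
Definition rpow (a b : R) : R :=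
  if Rle_dec a 0 then (if Req_EM_T b 0 then 1 else 0) else Rpower a b.

Definition delta (k x : R) : R := rpow (Rabs (2 * sin x)) (2 * k).

Definition cis (t : R) : C := (cos t, sin t).

Definition ip (k : R) (f g : R -> C) : C :=
  Cmult (RtoC (/ (2 * PI)))
    (RInt (V := C_R_CompleteNormedModule)
       (fun x => Cmult (Cmult (f x) (Cconj (g x))) (RtoC (delta k x))) 0 (2 * PI)).

(* E is the non-symmetric Heckman–Opdam polynomial E_n^k :
   E(x) = e^{nx} + sum_{j ◁ n} c_j e^{jx}, and (E(i.), e^{ij.})_k = 0 for j ◁ n. *)
Definition IsHO (k : R) (n : Z) (E : R -> C) : Prop :=
  exists c : Z -> C,
    (forall x, E x = Cplus (RtoC (exp (IZR n * x)))
                           (Csum (below n) (fun j => Cmult (c j) (RtoC (exp (IZR j * x)))))) /\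
    (forall j, tri j n = true ->
       ip k (fun t => Cplus (cis (IZR n * t))
                            (Csum (below n) (fun l => Cmult (c l) (cis (IZR l * t)))))
            (fun t => cis (IZR j * t)) = RtoC 0).

(* Main.v *)
Require Import Defs.
From Stdlib Require Import Reals ZArith List Lra Lia Permutation FunctionalExtensionality.
From Coquelicot Require Import Coquelicot.
Open Scope R_scope.
Local Open Scope bool_scope.

Lemma Csum_nil f : Csum nil f = RtoC 0.
Proof. reflexivity. Qed.
Lemma Csum_cons j l f : Csum (j :: l) f = Cplus (f j) (Csum l f).
Proof. reflexivity. Qed.

Lemma Csum_plus l f g : Csum l (fun j => Cplus (f j) (g j)) = Cplus (Csum l f) (Csum l g).
Proof. induction l as [|a l IH]; simpl. { apply injective_projections; simpl; lra. }
 rewrite IH. ring. Qed.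

Lemma Csum_scal l c f : Csum l (fun j => Cmult c (f j)) = Cmult c (Csum l f).
Proof. induction l as [|a l IH]; simpl. { apply injective_projections; simpl; lra. }
 rewrite IH. ring. Qed.

Lemma Csum_scal_r l c f : Csum l (fun j => Cmult (f j) c) = Cmult (Csum l f) c.
Proof. induction l as [|a l IH]; simpl. { apply injective_projections; simpl; lra. }
 rewrite IH. ring. Qed.

Lemma Csum_opp l f : Csum l (fun j => Copp (f j)) = Copp (Csum l f).
Proof. induction l as [|a l IH]; simpl. { apply injective_projections; simpl; lra. }
 rewrite IH. ring. Qed.

Lemma Csum_minus l f g : Csum l (fun j => Cminus (f j) (g j)) = Cminus (Csum l f) (Csum l g).
Proof. induction l as [|a l IH]; simpl. { apply injective_projections; simpl; lra. }
 rewrite IH. ring. Qed.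

Lemma Csum_ext_in l f g : (forall j, In j l -> f j = g j) -> Csum l f = Csum l g.
Proof. induction l as [|a l IH]; intros H; simpl; auto.
 rewrite H by (left; auto). rewrite IH; auto. intros j Hj; apply H; right; auto. Qed.

Lemma Csum_zero l f : (forall j, In j l -> f j = RtoC 0) -> Csum l f = RtoC 0.
Proof. induction l as [|a l IH]; intros H; simpl; auto.
 rewrite H by (left; auto). rewrite IH; [|intros j Hj; apply H; right; auto].
 apply injective_projections; simpl; lra. Qed.

Lemma Csum_swap l l' (F : Z -> Z -> C) :
  Csum l (fun j => Csum l' (F j)) = Csum l' (fun i => Csum l (fun j => F j i)).
Proof. induction l as [|a l IH]; simpl.
 - symmetry; apply Csum_zero; auto.
 - rewrite IH. rewrite <- Csum_plus. reflexivity. Qed.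

Lemma Csum_perm l l' f : Permutation l l' -> Csum l f = Csum l' f.
Proof. induction 1; simpl; auto. rewrite IHPermutation; auto. ring. congruence. Qed.

Lemma Csum_filter (p : Z -> bool) l f :
  Csum (filter p l) f = Csum l (fun j => if p j then f j else RtoC 0).
Proof. induction l as [|a l IH]; simpl; auto. destruct (p a); simpl; rewrite IH; auto. ring. Qed.

Lemma Csum_map (g : Z -> Z) l f : Csum (map g l) f = Csum l (fun j => f (g j)).
Proof. induction l as [|a l IH]; simpl; auto. rewrite IH; auto. Qed.

Lemma Csum_single l f m : NoDup l -> In m l -> (forall j, In j l -> j <> m -> f j = RtoC 0) ->
  Csum l f = f m.
Proof. induction l as [|a l IH]; intros Hnd Hin H; [destruct Hin|].
 inversion Hnd; subst. simpl. destruct Hin as [<-|Hin].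
 - rewrite Csum_zero. ring. intros j Hj. apply H. right; auto. intro; subst; contradiction.
 - rewrite H. rewrite IH; auto. ring. intros j Hj Hjm; apply H; auto. right; auto. left; auto.
   intro; subst; contradiction. Qed.

Definition rng (n : Z) : list Z :=
  map (fun m => (Z.of_nat m - Z.abs n)%Z) (seq 0 (2 * Z.to_nat (Z.abs n) + 1)).

Lemma below_eq n : below n = filter (fun j => tri j n) (rng n).
Proof. reflexivity. Qed.

Lemma in_rng n j : In j (rng n) <-> (- Z.abs n <= j <= Z.abs n)%Z.
Proof. unfold rng. rewrite in_map_iff. split.
 - intros [m [<- Hm]]. apply in_seq in Hm. lia.
 - intros H. exists (Z.to_nat (j + Z.abs n)). split. lia. apply in_seq. lia. Qed.

Lemma nodup_rng n : NoDup (rng n).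
Proof. unfold rng. apply FinFun.Injective_map_NoDup. intros a b H; lia. apply seq_NoDup. Qed.

Lemma rng_opp n : rng (- n) = rng n.
Proof. unfold rng. rewrite Z.abs_opp. reflexivity. Qed.

Lemma Csum_reflect n f : Csum (rng n) (fun j => f (- j)%Z) = Csum (rng n) f.
Proof. rewrite <- Csum_map. apply Csum_perm. apply NoDup_Permutation.
 - apply FinFun.Injective_map_NoDup. intros a b H; lia. apply nodup_rng.
 - apply nodup_rng.
 - intros x. rewrite in_map_iff, in_rng. split.
   + intros [y [<- Hy]]. apply in_rng in Hy. lia.
   + intros H. exists (- x)%Z. split. lia. apply in_rng. lia. Qed.

Ltac zb := repeat match goal with
 | |- context [Z.eqb ?a ?b] => destruct (Z.eqb_spec a b)
 | |- context [Z.ltb ?a ?b] => destruct (Z.ltb_spec a b)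
 | |- context [Z.leb ?a ?b] => destruct (Z.leb_spec a b)
 end; simpl; try lia.

Ltac cnorm := repeat progress (rewrite ?plus_IZR, ?minus_IZR, ?opp_IZR, ?mult_IZR, ?RtoC_plus, ?RtoC_minus, ?RtoC_mult, ?RtoC_opp in *).

Lemma lc1 (a b h : C) : h = RtoC 0 -> Cminus a b = h -> a = b.
Proof. intros H1 H2. rewrite H1 in H2. 
 replace a with (Cplus (Cminus a b) b) by ring. rewrite H2. ring. Qed.

Lemma lc2 (a b h c : C) : h = RtoC 0 -> Cminus a b = Cmult c h -> a = b.
Proof. intros H1 H2. rewrite H1 in H2. apply (lc1 _ _ (Cmult c (RtoC 0))). ring. auto. Qed.

Section Alg.
Variable k : R.
Variable mu : Z -> C.
Hypothesis mu_even : forall m, mu (- m)%Z = mu m.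
Hypothesis mu_rec : forall m,
  Cplus (Cmult (RtoC (2*k+1+IZR m)) (mu (m+1)%Z)) (Cmult (RtoC (2*k+1-IZR m)) (mu (m-1)%Z)) = RtoC 0.

Fixpoint Pf (g : Z -> C) (x : Z) (N : nat) : C :=
  match N with O => RtoC 0 | S N' => Cplus (Pf g x N') (g (x - 2 * Z.of_nat N)%Z) end.

Lemma Pf_S g x N : Pf g x (S N) = Cplus (Pf g x N) (g (x - 2 * Z.of_nat (S N))%Z).
Proof. reflexivity. Qed.
Lemma Pf_O g x : Pf g x O = RtoC 0.
Proof. reflexivity. Qed.

Lemma Pf_split g x N M : Pf g x (N + M) = Cplus (Pf g x N) (Pf g (x - 2 * Z.of_nat N)%Z M).
Proof. induction M as [|M IH].
 - rewrite Nat.add_0_r, Pf_O. ring.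
 - rewrite Nat.add_succ_r, !Pf_S, IH.
   replace (x - 2 * Z.of_nat (S (N + M)))%Z with (x - 2 * Z.of_nat N - 2 * Z.of_nat (S M))%Z by lia. ring.
Qed.

Lemma Pf_shift g x l N : Pf (fun j => g (j - l)%Z) x N = Pf g (x - l) N.
Proof. induction N. reflexivity. rewrite !Pf_S, IHN. f_equal. f_equal. lia. Qed.

Definition PZ x N := Pf mu x (Z.to_nat N).

Lemma PZ_split x N M T y : (0 <= N)%Z -> (0 <= M)%Z -> T = (N + M)%Z -> y = (x - 2 * N)%Z ->
  PZ x T = Cplus (PZ x N) (PZ y M).
Proof. intros HN HM -> ->. unfold PZ. rewrite Z2Nat.inj_add by lia. rewrite Pf_split.
 rewrite Z2Nat.id by lia. reflexivity. Qed.

Lemma PZ_1 x y : y = (x - 2)%Z -> PZ x 1 = mu y.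
Proof. intros ->. unfold PZ. change (Z.to_nat 1) with (S O). rewrite Pf_S, Pf_O.
 replace (x - 2 * Z.of_nat 1)%Z with (x-2)%Z by lia. ring. Qed.

Lemma PZ_0 x : PZ x 0 = RtoC 0.
Proof. reflexivity. Qed.

Lemma PZ_refl2 d : (0 <= d)%Z -> PZ (d + 2) d = PZ d d.
Proof. intros Hd.
 assert (H1 := PZ_split (d+2) 1 d (1 + d) d ltac:(lia) Hd eq_refl ltac:(lia)).
 assert (H2 := PZ_split (d+2) d 1 (d + 1) (d + 2 - 2 * d) Hd ltac:(lia) eq_refl eq_refl).
 rewrite (PZ_1 (d+2) d) in H1 by lia. rewrite (PZ_1 _ (-d)) in H2 by lia.
 rewrite mu_even in H2. replace (d+1)%Z with (1+d)%Z in H2 by lia. rewrite H1 in H2.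
 replace (PZ (d+2) d) with (Cminus (Cplus (mu d) (PZ d d)) (mu d)) by (rewrite H2; ring). ring. Qed.

Definition K := RtoC k.

Lemma M_step d : (2 <= d)%Z ->
  Cplus (Cmult (RtoC (IZR (d-2))) (mu (d-2)%Z)) (Cmult (RtoC (2*k)) (PZ (d-2) (d-2))) = RtoC 0 ->
  Cplus (Cmult (RtoC (IZR d)) (mu d)) (Cmult (RtoC (2*k)) (PZ d d)) = RtoC 0.
Proof. intros Hd IH1.
     assert (E1 : PZ d d = Cplus (Cplus (mu (d-2)%Z) (PZ (d-2) (d-2))) (mu d)).
     { rewrite (PZ_split d 1 (d-1) d (d-2)) by lia. rewrite (PZ_1 d (d-2)) by lia.
       rewrite (PZ_split (d-2) (d-2) 1 (d-1) (d - 2 - 2*(d-2))) by lia.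
       rewrite (PZ_1 _ (-d)) by lia. rewrite mu_even. ring. }
     rewrite E1.
     assert (H := mu_rec (d-1)). replace (d-1+1)%Z with d in H by lia.
     replace (d-1-1)%Z with (d-2)%Z in H by lia.
     cnorm.
     apply (lc1 _ _ _ H). apply (lc1 _ _ _ IH1). ring. Qed.

Lemma M_d : forall d, (0 <= d)%Z -> Cplus (Cmult (RtoC (IZR d)) (mu d)) (Cmult (RtoC (2*k)) (PZ d d)) = RtoC 0.
Proof.
 assert (forall N : nat, Cplus (Cmult (RtoC (IZR (Z.of_nat N))) (mu (Z.of_nat N))) (Cmult (RtoC (2*k)) (PZ (Z.of_nat N) (Z.of_nat N))) = RtoC 0 /\
   Cplus (Cmult (RtoC (IZR (Z.of_nat (S N)))) (mu (Z.of_nat (S N)))) (Cmult (RtoC (2*k)) (PZ (Z.of_nat (S N)) (Z.of_nat (S N)))) = RtoC 0).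
 { induction N as [|N [IH1 IH2]].
   - split.
     + simpl. rewrite PZ_0. ring.
     + assert (Hm : mu (-1)%Z = mu 1%Z) by (rewrite <- (mu_even 1); reflexivity).
       change (Z.of_nat 1) with 1%Z. rewrite (PZ_1 1 (-1)) by lia. rewrite Hm.
       assert (H := mu_rec 0). replace (0+1)%Z with 1%Z in H by lia. replace (0-1)%Z with (-1)%Z in H by lia.
       rewrite Hm in H.
       replace (2*k+1+IZR 0) with (2*k+1) in H by (simpl; ring). replace (2*k+1-IZR 0) with (2*k+1) in H by (simpl; ring).
       change (IZR 1) with 1.
       apply (lc2 _ _ _ (RtoC (/2)) H). cnorm.
       assert (Hh : Cmult (RtoC (/2)) (RtoC 2) = RtoC 1) by (rewrite <- RtoC_mult; f_equal; field).
       match goal with |- _ = Cmult ?c ?B => replace (Cmult c B) with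
         (Cmult (Cmult (RtoC (/2)) (RtoC 2)) (Cmult (Cplus (Cmult (RtoC 2) (RtoC k)) (RtoC 1)) (mu 1%Z))) by ring end.
       rewrite Hh. ring.
   - split; [exact IH2|].
     apply M_step. lia. replace (Z.of_nat (S (S N)) - 2)%Z with (Z.of_nat N) by lia. exact IH1. }
 intros d Hd. destruct (H (Z.to_nat d)) as [H1 _]. rewrite Z2Nat.id in H1 by lia. exact H1.
Qed.

Definition lam (m : Z) : C := if (0 <? m)%Z then RtoC (IZR m + 2*k) else RtoC (IZR m).

Definition cs (m l : Z) : C :=
  if (0 <? m)%Z then Cplus (Cmult (RtoC (IZR m + 2*k)) (mu (m - l)%Z)) (Cmult (RtoC (2*k)) (PZ (m-l) (m-1)))
  else if (m =? 0)%Z then RtoC 0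
  else Cminus (Cmult (RtoC (IZR m)) (mu (m - l)%Z)) (Cmult (RtoC (2*k)) (PZ (-m-l+2) (-m))).

Lemma cs_A m l : (0 < l <= m)%Z -> cs m l = cs l m.
Proof. intros H. unfold cs. zb.
 assert (Hd := M_d (m-l) ltac:(lia)).
 rewrite (PZ_split (m-l) (m-l) (l-1) (m-1) (l-m)) by lia.
 replace (l-m)%Z with (-(m-l))%Z by lia. rewrite mu_even.
 cnorm. apply (lc1 _ _ _ Hd). ring. Qed.

Lemma cs_B m : (0 < m)%Z -> cs m 0 = cs 0 m.
Proof. intros H. unfold cs. zb.
 assert (Hd := M_d m ltac:(lia)).
 rewrite (PZ_split m (m-1) 1 m (m - 2*(m-1))) in Hd by lia.
 rewrite (PZ_1 _ (-m)) in Hd by lia. rewrite mu_even in Hd.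
 replace (m-0)%Z with m by lia. cnorm. apply (lc1 _ _ _ Hd). ring. Qed.

Lemma cs_C m l : (0 < m)%Z -> (l < 0)%Z -> cs m l = cs l m.
Proof. intros H1 H2. unfold cs. zb.
 set (p := (-l)%Z). set (d := (m - l)%Z).
 assert (Hd := M_d d ltac:(lia)).
 rewrite (PZ_split d (m-1) (p+1) d (p - m + 2)) in Hd by lia.
 rewrite (PZ_split (p-m+2) p 1 (p+1) (p - m + 2 - 2 * p)) in Hd by lia.
 rewrite (PZ_1 _ (-d)) in Hd by lia. rewrite mu_even in Hd.
 replace (-l-m+2)%Z with (p-m+2)%Z by lia. replace (l - m)%Z with (-d)%Z by lia. rewrite mu_even.
 replace (-l)%Z with p by lia. unfold d in *.
 assert (Hl : IZR l = - IZR p) by (unfold p; rewrite opp_IZR; ring).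
 cnorm. rewrite Hl in *. cnorm. apply (lc1 _ _ _ Hd). ring. Qed.

Lemma cs_E m : (m < 0)%Z -> cs m 0 = cs 0 m.
Proof. intros H. unfold cs. zb.
 set (p := (-m)%Z). assert (Hd := M_d p ltac:(lia)).
 replace (p-0+2)%Z with (p+2)%Z by lia. rewrite PZ_refl2 by lia.
 replace (m-0)%Z with (-p)%Z by lia. rewrite mu_even.
 assert (Hl : IZR m = - IZR p) by (unfold p; rewrite opp_IZR; ring).
 cnorm. rewrite Hl in *. cnorm. apply (lc2 _ _ _ (RtoC (-1)) Hd). ring_simplify. 
 apply injective_projections; simpl; ring. Qed.

Lemma cs_F m l : (m <= l)%Z -> (l < 0)%Z -> cs m l = cs l m.
Proof. intros H1 H2. unfold cs. zb.
 remember (-m)%Z as p eqn:Ep. remember (-l)%Z as q eqn:Eq. remember (p - q)%Z as d eqn:Ed.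
 assert (Hd := M_d d ltac:(lia)).
 replace (p-l+2)%Z with (p+q+2)%Z by lia. replace (q-m+2)%Z with (p+q+2)%Z by lia.
 rewrite (PZ_split (p+q+2) q d p (d + 2)) by lia. rewrite PZ_refl2 by lia.
 replace (m - l)%Z with (-d)%Z by lia. replace (l - m)%Z with d by lia. rewrite mu_even.
 assert (Hm : IZR m = - IZR p) by (rewrite Ep, opp_IZR; ring).
 assert (Hl : IZR l = - IZR q) by (rewrite Eq, opp_IZR; ring).
 assert (Hdd : IZR d = IZR p - IZR q) by (rewrite Ed, minus_IZR; ring).
 rewrite Hdd in Hd. cnorm. rewrite Hm, Hl in *. cnorm. apply (lc2 _ _ _ (RtoC (-1)) Hd). ring_simplify.
 apply injective_projections; simpl; ring. Qed.

Lemma cs_sym m l : cs m l = cs l m.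
Proof.
 destruct (Z.lt_trichotomy m 0) as [Hm|[Hm|Hm]]; destruct (Z.lt_trichotomy l 0) as [Hl|[Hl|Hl]]; subst.
 - destruct (Z.le_gt_cases m l). apply cs_F; lia. symmetry; apply cs_F; lia.
 - apply cs_E; auto.
 - symmetry; apply cs_C; auto.
 - symmetry; apply cs_E; auto.
 - reflexivity.
 - symmetry; apply cs_B; auto.
 - apply cs_C; auto.
 - apply cs_B; auto.
 - destruct (Z.le_gt_cases l m). apply cs_A; lia. symmetry; apply cs_A; lia.
Qed.

Ltac modf := repeat match goal with
 | H : context [(?e mod 2)%Z] |- _ =>
   let r := fresh "r" in let q := fresh "q" in
   pose proof (Z.div_mod e 2 ltac:(lia)) ; pose proof (Z.mod_pos_bound e 2 ltac:(lia));
   set (r := (e mod 2)%Z) in *; set (q := (e / 2)%Z) in *; clearbody r q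
 end.

Ltac zb2 := repeat match goal with
 | |- context [Z.eqb ?a ?b] => destruct (Z.eqb_spec a b)
 | |- context [Z.ltb ?a ?b] => destruct (Z.ltb_spec a b)
 | |- context [Z.leb ?a ?b] => destruct (Z.leb_spec a b)
 end; cbn [andb orb negb]; try (modf; lia); try reflexivity.

Variable n : Z.

Lemma Csum_prog g x N : (N = O \/ (- Z.abs n <= x - 2 * Z.of_nat N /\ x - 2 <= Z.abs n)%Z) ->
  Csum (rng n) (fun j => if (x - 2 * Z.of_nat N <=? j)%Z && (j <=? x - 2)%Z && ((x - j) mod 2 =? 0)%Z then g j else RtoC 0)
  = Pf g x N.
Proof. induction N as [|N IH]; intros HN.
 - rewrite Pf_O. apply Csum_zero. intros j _. zb2; reflexivity.
 - rewrite Pf_S.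
   transitivity (Csum (rng n) (fun j => Cplus
     (if (x - 2 * Z.of_nat N <=? j)%Z && (j <=? x - 2)%Z && ((x - j) mod 2 =? 0)%Z then g j else RtoC 0)
     (if (j =? x - 2 * Z.of_nat (S N))%Z then g j else RtoC 0))).
   { apply Csum_ext_in. intros j _. zb2; ring. }
   rewrite Csum_plus, IH by (destruct N; [left; auto| right; lia]). f_equal.
   rewrite (Csum_single _ _ (x - 2 * Z.of_nat (S N))%Z).
   + rewrite Z.eqb_refl. reflexivity.
   + apply nodup_rng.
   + apply in_rng. lia.
   + intros j _ Hj. zb2; reflexivity.
Qed.

Definition Dm (j m : Z) : C :=
  if (j =? m)%Z then lam m
  else if (0 <? m)%Z && (Z.abs j <? m)%Z && ((m - j) mod 2 =? 0)%Z then RtoC (2*k)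
  else if (m <? 0)%Z && (m <? j)%Z && (j <=? -m)%Z && ((m - j) mod 2 =? 0)%Z then RtoC (-(2*k))
  else RtoC 0.

Lemma colsum m l : (Z.abs m <= Z.abs n)%Z ->
  Csum (rng n) (fun j => Cmult (Dm j m) (mu (j - l)%Z)) = cs m l.
Proof. intros Hm. unfold cs.
 destruct (Z.ltb_spec 0 m) as [H0|H0].
 - transitivity (Csum (rng n) (fun j => Cplus (if (j =? m)%Z then Cmult (lam m) (mu (j - l)%Z) else RtoC 0)
      (Cmult (RtoC (2*k)) (if (m - 2 * Z.of_nat (Z.to_nat (m-1)) <=? j)%Z && (j <=? m - 2)%Z && ((m - j) mod 2 =? 0)%Z then mu (j - l)%Z else RtoC 0)))).
   { apply Csum_ext_in. intros j _. unfold Dm. zb2; ring. }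
   rewrite Csum_plus, Csum_scal, Csum_prog by (right; lia).
   rewrite (Csum_single _ _ m). rewrite Z.eqb_refl. unfold lam. zb2.
   rewrite Pf_shift. reflexivity.
   apply nodup_rng. apply in_rng; lia. intros j _ Hj. zb2.
 - destruct (Z.eqb_spec m 0) as [Hm0|Hm0].
   + apply Csum_zero. intros j _. subst m. unfold Dm, lam. zb2; ring.
   + transitivity (Csum (rng n) (fun j => Cplus (if (j =? m)%Z then Cmult (lam m) (mu (j - l)%Z) else RtoC 0)
      (Cmult (RtoC (-(2*k))) (if (-m+2 - 2 * Z.of_nat (Z.to_nat (-m)) <=? j)%Z && (j <=? -m+2 - 2)%Z && ((-m+2 - j) mod 2 =? 0)%Z then mu (j - l)%Z else RtoC 0)))).
     { apply Csum_ext_in. intros j _. unfold Dm. zb2; ring. }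
     rewrite Csum_plus, Csum_scal, Csum_prog by (right; lia).
     rewrite (Csum_single _ _ m). rewrite Z.eqb_refl. unfold lam. zb2.
     rewrite Pf_shift. unfold PZ. replace (-m+2-l)%Z with (-m-l+2)%Z by lia. cnorm. ring.
     apply nodup_rng. apply in_rng; lia. intros j _ Hj. zb2.
Qed.

Definition Bd (x : Z -> C) (i : Z) : C := Csum (rng n) (fun j => Cmult (x j) (mu (j - i)%Z)).
Definition B (a b : Z -> C) : C :=
  Csum (rng n) (fun j => Csum (rng n) (fun l => Cmult (Cmult (a j) (b l)) (mu (j - l)%Z))).
Definition Dv (a : Z -> C) (j : Z) : C := Csum (rng n) (fun m => Cmult (Dm j m) (a m)).

Lemma B_Bd a b : B a b = Csum (rng n) (fun l => Cmult (b l) (Bd a l)).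
Proof. unfold B. rewrite Csum_swap. apply Csum_ext_in. intros l _. unfold Bd.
 rewrite <- Csum_scal. apply Csum_ext_in. intros j _. ring. Qed.

Lemma B_sym a b : B a b = B b a.
Proof. unfold B. rewrite Csum_swap. apply Csum_ext_in. intros j _. apply Csum_ext_in. intros l _.
 replace (l - j)%Z with (- (j - l))%Z by lia. rewrite mu_even. ring. Qed.

Lemma B_ext_l a a' b : (forall j, In j (rng n) -> a j = a' j) -> B a b = B a' b.
Proof. intros H. unfold B. apply Csum_ext_in. intros j Hj. rewrite H by auto. reflexivity. Qed.

Lemma Bd_lin a a' c i : Bd (fun j => Cplus (a j) (Cmult c (a' j))) i = Cplus (Bd a i) (Cmult c (Bd a' i)).
Proof. unfold Bd. rewrite <- Csum_scal, <- Csum_plus. apply Csum_ext_in. intros j _. ring. Qed.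

Lemma B_lin_l a a' c b : B (fun j => Cplus (a j) (Cmult c (a' j))) b = Cplus (B a b) (Cmult c (B a' b)).
Proof. rewrite !B_Bd. rewrite <- Csum_scal, <- Csum_plus. apply Csum_ext_in. intros l _.
 rewrite Bd_lin. ring. Qed.

Lemma Dv_sym a b : B (Dv a) b = B a (Dv b).
Proof.
 transitivity (Csum (rng n) (fun j => Csum (rng n) (fun l => Cmult (Cmult (a j) (b l)) (cs j l)))).
 - unfold B, Dv.
   transitivity (Csum (rng n) (fun j => Csum (rng n) (fun l => Csum (rng n) (fun m =>
       Cmult (Cmult (Cmult (Dm j m) (a m)) (b l)) (mu (j - l)%Z))))).
   { apply Csum_ext_in; intros j _; apply Csum_ext_in; intros l _. rewrite !Csum_scal_r. reflexivity. }
   transitivity (Csum (rng n) (fun j => Csum (rng n) (fun m => Csum (rng n) (fun l =>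
       Cmult (Cmult (Cmult (Dm j m) (a m)) (b l)) (mu (j - l)%Z))))).
   { apply Csum_ext_in; intros j _. apply Csum_swap. }
   rewrite Csum_swap. apply Csum_ext_in; intros m Hm. rewrite Csum_swap. apply Csum_ext_in; intros l _.
   rewrite <- (colsum m l). rewrite <- Csum_scal. apply Csum_ext_in. intros j _. ring.
   apply in_rng in Hm. lia.
 - unfold B, Dv.
   transitivity (Csum (rng n) (fun j => Csum (rng n) (fun l => Csum (rng n) (fun m =>
       Cmult (Cmult (a j) (Cmult (Dm l m) (b m))) (mu (j - l)%Z))))).
   2:{ apply Csum_ext_in; intros j _; apply Csum_ext_in; intros l _. rewrite <- Csum_scal, <- Csum_scal_r. reflexivity. }
   transitivity (Csum (rng n) (fun j => Csum (rng n) (fun m => Csum (rng n) (fun l =>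
       Cmult (Cmult (a j) (Cmult (Dm l m) (b m))) (mu (j - l)%Z))))).
   2:{ apply Csum_ext_in; intros j _. apply Csum_swap. }
   apply Csum_ext_in; intros j _. apply Csum_ext_in; intros m Hm.
   rewrite cs_sym. rewrite <- (colsum m j). rewrite <- Csum_scal. apply Csum_ext_in. intros l _.
   replace (j - l)%Z with (- (l - j))%Z by lia. rewrite mu_even. ring.
   apply in_rng in Hm. lia.
Qed.

Lemma Dm_refl j m : Dm j (-m) = Cminus (Cplus (Copp (Dm (-j) m)) (if (j =? -m)%Z then RtoC (2*k) else RtoC 0))
   (if (j =? m)%Z then RtoC (2*k) else RtoC 0).
Proof. unfold Dm, lam. zb2; cnorm; try ring. Qed.

Lemma Dv_s a j : In j (rng n) ->
  Dv (fun i => a (- i)%Z) j = Cminus (Cplus (Copp (Dv a (- j)%Z)) (Cmult (RtoC (2*k)) (a (- j)%Z))) (Cmult (RtoC (2*k)) (a j)).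
Proof. intros Hj. unfold Dv.
 transitivity (Csum (rng n) (fun m => Cmult (Dm j (- - m)%Z) (a (- m)%Z))).
 { apply Csum_ext_in. intros m _. rewrite Z.opp_involutive. reflexivity. }
 rewrite (Csum_reflect n (fun m => Cmult (Dm j (- m)%Z) (a m))).
 transitivity (Csum (rng n) (fun m => Cminus (Cplus (Copp (Cmult (Dm (-j) m) (a m)))
     (Cmult (RtoC (2*k)) (if (m =? -j)%Z then a m else RtoC 0)))
     (Cmult (RtoC (2*k)) (if (m =? j)%Z then a m else RtoC 0)))).
 { apply Csum_ext_in. intros m _. rewrite Dm_refl.
   destruct (Z.eqb_spec j (-m)); destruct (Z.eqb_spec m (-j)); try lia;
   destruct (Z.eqb_spec j m); destruct (Z.eqb_spec m j); try lia; ring. }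
 rewrite Csum_minus, Csum_plus, Csum_opp, !Csum_scal.
 rewrite (Csum_single _ (fun m => if (m =? -j)%Z then a m else RtoC 0) (-j)).
 rewrite (Csum_single _ (fun m => if (m =? j)%Z then a m else RtoC 0) j).
 rewrite !Z.eqb_refl. reflexivity.
 all: try apply nodup_rng; auto.
 - intros m _ Hm. destruct (Z.eqb_spec m j); [lia|reflexivity].
 - apply in_rng in Hj; apply in_rng; lia.
 - intros m _ Hm. destruct (Z.eqb_spec m (-j)); [lia|reflexivity].
Qed.

Definition inW (j : Z) : bool := (Z.abs j <? n)%Z && ((n - j) mod 2 =? 0)%Z.

Lemma inW_true j : inW j = true -> (Z.abs j < n /\ (n - j) mod 2 = 0)%Z.
Proof. unfold inW. intros H. apply andb_prop in H. destruct H as [H1 H2].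
 apply Z.ltb_lt in H1. apply Z.eqb_eq in H2. auto. Qed.
Lemma inW_false j : inW j = false -> ~ (Z.abs j < n /\ (n - j) mod 2 = 0)%Z.
Proof. unfold inW. intros H [H1 H2]. apply Z.ltb_lt in H1. apply Z.eqb_eq in H2.
 rewrite H1, H2 in H. discriminate. Qed.

Lemma Dv_tri e : (0 < n)%Z -> (forall j, In j (rng n) -> j <> n -> inW j = false -> e j = RtoC 0) ->
  forall j, In j (rng n) -> inW j = false -> Dv e j = Cmult (lam n) (e j).
Proof. intros Hn He j Hj Hwj. pose proof (inW_false _ Hwj) as Hwj'. unfold Dv.
 destruct (Z.eqb_spec j n) as [->|Hjn].
 - rewrite (Csum_single _ _ n). unfold Dm at 1. rewrite Z.eqb_refl. reflexivity.
   apply nodup_rng. apply in_rng; lia.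
   intros m Hm Hmn. destruct (inW m) eqn:Hw.
   + apply inW_true in Hw. replace (Dm n m) with (RtoC 0). ring.
     unfold Dm. zb2.
   + rewrite He by auto. ring.
 - rewrite He by auto. rewrite Csum_zero. ring.
   intros m Hm. destruct (Z.eqb_spec m n) as [->|Hmn].
   + replace (Dm j n) with (RtoC 0). ring. unfold Dm. zb2.
   + destruct (inW m) eqn:Hw.
     * apply inW_true in Hw. replace (Dm j m) with (RtoC 0). ring. unfold Dm.
       destruct (Z.eqb_spec j m). { subst; exfalso; apply Hwj'; auto. } zb2.
     * rewrite He by auto. ring.
Qed.

Lemma inW_opp i : inW (- i)%Z = inW i.
Proof. unfold inW. zb2. Qed.

Lemma Bd_lin3 a1 a2 a3 c1 c2 c3 i :
  Bd (fun j => Cplus (Cplus (Cmult c1 (a1 j)) (Cmult c2 (a2 j))) (Cmult c3 (a3 j))) i =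
  Cplus (Cplus (Cmult c1 (Bd a1 i)) (Cmult c2 (Bd a2 i))) (Cmult c3 (Bd a3 i)).
Proof. unfold Bd. rewrite <- !Csum_scal, <- !Csum_plus. apply Csum_ext_in. intros j _. ring. Qed.

Lemma B_lin3 a1 a2 a3 c1 c2 c3 b :
  B (fun j => Cplus (Cplus (Cmult c1 (a1 j)) (Cmult c2 (a2 j))) (Cmult c3 (a3 j))) b =
  Cplus (Cplus (Cmult c1 (B a1 b)) (Cmult c2 (B a2 b))) (Cmult c3 (B a3 b)).
Proof. rewrite !B_Bd. rewrite <- !Csum_scal, <- !Csum_plus. apply Csum_ext_in. intros l _.
 rewrite Bd_lin3. ring. Qed.

Lemma B_orth y x : (forall l, In l (rng n) -> inW l = true -> Bd y l = RtoC 0) ->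
  (forall l, In l (rng n) -> inW l = false -> x l = RtoC 0) -> B y x = RtoC 0.
Proof. intros Hy Hx. rewrite B_Bd. apply Csum_zero. intros l Hl.
 destruct (inW l) eqn:Hw. rewrite Hy by auto. ring. rewrite Hx by auto. ring. Qed.

Theorem key (Hn : (0 < n)%Z) (Hk : 0 <= k) (e : Z -> C) :
  e n = RtoC 1 ->
  (forall j, In j (rng n) -> j <> n -> inW j = false -> e j = RtoC 0) ->
  (forall i, In i (rng n) -> inW i = true -> Bd e i = RtoC 0) ->
  forall i, In i (rng n) -> (inW i = true \/ i = n) ->
  Bd (fun j => Cplus (e (- j)%Z) (Cmult (RtoC (k / (IZR n + k))) (e j))) i = RtoC 0.
Proof.
 intros He1 He0 Horth.
 set (se := fun j => e (- j)%Z).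
 assert (Hrng : forall j, In j (rng n) -> In (- j)%Z (rng n)).
 { intros j Hj. apply in_rng in Hj. apply in_rng. lia. }
 assert (H1 : forall i, In i (rng n) -> inW i = true -> Bd se i = RtoC 0).
 { intros i Hi Hw. unfold Bd, se.
   transitivity (Csum (rng n) (fun j => (fun j => Cmult (e j) (mu (- j - i)%Z)) (- j)%Z)).
   { apply Csum_ext_in. intros j _. cbv beta. rewrite Z.opp_involutive. reflexivity. }
   rewrite (Csum_reflect n (fun j => Cmult (e j) (mu (- j - i)%Z))). rewrite <- (Horth (- i)%Z) by (auto; rewrite inW_opp; auto).
   unfold Bd. apply Csum_ext_in. intros j _. replace (- j - i)%Z with (- (j - - i))%Z by lia.
   rewrite mu_even. reflexivity. }
 set (r := fun j => Cminus (Dv e j) (Cmult (lam n) (e j))).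
 assert (Hr : forall j, In j (rng n) -> inW j = false -> r j = RtoC 0).
 { intros j Hj Hw. unfold r. rewrite (Dv_tri e Hn He0 j Hj Hw). ring. }
 set (X := B se e). set (Y := B e e).
 assert (S1 : B se (Dv e) = Cmult (lam n) X).
 { rewrite B_sym. rewrite (B_ext_l _ (fun j => Cplus (Cplus (Cmult (lam n) (e j)) (Cmult (RtoC 1) (r j))) (Cmult (RtoC 0) (r j)))).
   rewrite B_lin3. rewrite (B_sym r se). rewrite (B_orth se r H1 Hr). unfold X. rewrite B_sym. ring.
   intros j _. unfold r. ring. }
 assert (S2 : B (Dv se) e = Cplus (Cplus (Cmult (RtoC (-1)) (Cmult (lam n) X)) (Cmult (RtoC (2*k)) X)) (Cmult (RtoC (-(2*k))) Y)).
 { rewrite (B_ext_l _ (fun j => Cplus (Cplus (Cmult (RtoC (-1)) (Dv e (- j)%Z)) (Cmult (RtoC (2*k)) (se j))) (Cmult (RtoC (-(2*k))) (e j)))).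
   rewrite B_lin3. f_equal. f_equal. f_equal.
   rewrite (B_ext_l _ (fun j => Cplus (Cplus (Cmult (lam n) (se j)) (Cmult (RtoC 1) (r (- j)%Z))) (Cmult (RtoC 0) (r j)))).
   rewrite B_lin3. rewrite (B_sym (fun j => r (- j)%Z) e). rewrite B_orth with (y := e) (x := fun j => r (- j)%Z).
   unfold X. ring. auto. intros l Hl Hw. apply Hr. auto. rewrite inW_opp. auto.
   intros j Hj. unfold r, se. ring.
   intros j Hj. unfold se. rewrite Dv_s by auto. cnorm. ring. }
 assert (S3 := Dv_sym se e). rewrite S1, S2 in S3.
 assert (E1 : Cminus (Cplus (Cplus (Cmult (RtoC (-1)) (Cmult (lam n) X)) (Cmult (RtoC (2*k)) X)) (Cmult (RtoC (-(2*k))) Y)) (Cmult (lam n) X) = RtoC 0).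
 { rewrite S3. ring. }
 assert (E2 : Cplus (Cmult (RtoC (2*IZR n + 2*k)) X) (Cmult (RtoC (2*k)) Y) = RtoC 0).
 { apply (lc2 _ _ _ (RtoC (-1)) E1). unfold lam. zb2. cnorm. ring. }
 assert (HX : Bd se n = X).
 { unfold X. rewrite B_Bd. rewrite (Csum_single _ _ n). rewrite He1. ring. apply nodup_rng. apply in_rng; lia.
   intros l Hl Hln. destruct (inW l) eqn:Hw. rewrite H1 by auto. ring. rewrite He0 by auto. ring. }
 assert (HY : Bd e n = Y).
 { unfold Y. rewrite B_Bd. rewrite (Csum_single _ _ n). rewrite He1. ring. apply nodup_rng. apply in_rng; lia.
   intros l Hl Hln. destruct (inW l) eqn:Hw. rewrite Horth by auto. ring. rewrite He0 by auto. ring. }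
 intros i Hi Hw. rewrite Bd_lin. fold se.
 destruct Hw as [Hw| ->].
 - rewrite H1, Horth by auto. ring.
 - rewrite HX, HY.
   assert (Hnk : 0 < IZR n + k). { apply IZR_lt in Hn. simpl in Hn. lra. }
   set (c := / (2*IZR n + 2*k)).
   assert (Hc1 : Cmult (RtoC c) (RtoC (2*IZR n + 2*k)) = RtoC 1).
   { rewrite <- RtoC_mult. f_equal. unfold c. field. lra. }
   assert (Hc2 : Cmult (RtoC c) (RtoC (2*k)) = RtoC (k / (IZR n + k))).
   { rewrite <- RtoC_mult. f_equal. unfold c. field. lra. }
   apply (lc2 _ _ _ (RtoC c) E2). rewrite <- Hc2.
   transitivity (Cplus (Cmult (Cmult (RtoC c) (RtoC (2*IZR n + 2*k))) X) (Cmult (Cmult (RtoC c) (RtoC (2*k))) Y)).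
   rewrite Hc1. ring. ring.
Qed.

End Alg.

Lemma rpow_0 a : rpow a 0 = 1.
Proof. unfold rpow. destruct (Rle_dec a 0). destruct (Req_EM_T 0 0); auto. contradiction.
 apply Rpower_O. lra. Qed.

Lemma delta_k0 t : delta 0 t = 1.
Proof. unfold delta. replace (2*0) with 0 by ring. apply rpow_0. Qed.

Lemma rpow_pos a b : 0 < a -> rpow a b = exp (b * ln a).
Proof. intros H. unfold rpow. destruct (Rle_dec a 0). lra. reflexivity. Qed.

Lemma rpow_zero b : b <> 0 -> rpow 0 b = 0.
Proof. intros H. unfold rpow. destruct (Rle_dec 0 0); [|lra]. destruct (Req_EM_T b 0); [contradiction|auto]. Qed.

Lemma rpow_nonneg a b : 0 <= rpow a b.
Proof. unfold rpow. destruct (Rle_dec a 0). destruct (Req_EM_T b 0); lra.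
 unfold Rpower. left; apply exp_pos. Qed.

Lemma delta_nonneg k t : 0 <= delta k t.
Proof. apply rpow_nonneg. Qed.

Lemma delta_pos k t : sin t <> 0 -> 0 < delta k t.
Proof. intros H. unfold delta. rewrite rpow_pos. apply exp_pos.
 apply Rabs_pos_lt. lra. Qed.

Lemma delta_zero k t : 0 < k -> sin t = 0 -> delta k t = 0.
Proof. intros Hk H. unfold delta. rewrite H. replace (Rabs (2*0)) with 0.
 apply rpow_zero. lra. rewrite Rmult_0_r, Rabs_R0. auto. Qed.

Lemma delta_exp k t : sin t <> 0 -> delta k t = exp (k * ln ((2 * sin t)^2)).
Proof. intros H. unfold delta. rewrite rpow_pos by (apply Rabs_pos_lt; lra).
 f_equal. rewrite <- (pow2_abs (2 * sin t)). rewrite ln_pow by (apply Rabs_pos_lt; lra).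
 simpl. ring. Qed.

Lemma delta_sym k t : delta k (2 * PI - t) = delta k t.
Proof. unfold delta. f_equal. rewrite sin_minus, sin_2PI, cos_2PI.
 replace (2 * (0 * cos t - 1 * sin t)) with (- (2 * sin t)) by ring. apply Rabs_Ropp. Qed.

Definition rho (k y : R) : R := rpow (Rabs y) (2 * k).

Lemma rho_cont k y0 : 0 < k -> continuous (rho k) y0.
Proof. intros Hk. destruct (Req_dec y0 0) as [->|Hy0].
 - apply continuity_pt_filterlim. intros eps Heps.
   exists (exp (ln eps / (2 * k))). split. apply exp_pos.
   intros y [[_ Hy] Hd]. simpl in Hd. unfold R_dist in *. unfold rho.
   rewrite Rabs_R0, rpow_zero by lra. rewrite Rminus_0_r in *.
   rewrite rpow_pos by (apply Rabs_pos_lt; auto).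
   simpl. unfold R_dist. rewrite Rminus_0_r.
   rewrite Rabs_pos_eq by (left; apply exp_pos).
   rewrite <- (exp_ln eps) by lra. apply exp_increasing.
   apply ln_increasing in Hd. rewrite ln_exp in Hd.
   apply (Rmult_lt_compat_l (2*k)) in Hd. field_simplify in Hd. lra. lra. lra.
   apply Rabs_pos_lt; auto.
 - apply (continuous_ext_loc _ (fun y => exp (k * ln (y ^ 2)))).
   + assert (H2 : 0 < Rabs y0 / 2) by (apply Rabs_pos_lt in Hy0; lra). exists (mkposreal _ H2).
     intros y Hy. change (Rabs (y - y0) < Rabs y0 / 2) in Hy.
     assert (Hy' : y <> 0). { intros ->. rewrite Rminus_0_l, Rabs_Ropp in Hy. lra. }
     unfold rho. rewrite rpow_pos by (apply Rabs_pos_lt; auto).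
     f_equal. rewrite <- (pow2_abs y). rewrite ln_pow by (apply Rabs_pos_lt; auto). simpl. ring.
   + apply continuity_pt_filterlim, derivable_continuous_pt, ex_derive_Reals_0. auto_derive. apply pow2_gt_0. auto.
Qed.

Lemma delta_rho k t : delta k t = rho k (2 * sin t).
Proof. reflexivity. Qed.

Lemma delta_cont k t : 0 <= k -> continuous (delta k) t.
Proof. intros Hk. destruct (Req_dec k 0) as [->|Hk0].
 - apply (continuous_ext (fun _ => 1)). intros; rewrite delta_k0; auto. apply continuous_const.
 - apply (continuous_comp (fun t => 2 * sin t) (rho k)).
   + apply (continuous_mult (fun _ => 2) sin). apply continuous_const. apply continuous_sin.
   + apply rho_cont. lra.
Qed.

Lemma abs_sin_le x : Rabs (sin x) <= Rabs x.
Proof.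
 assert (Hpi := PI2_1).
 assert (Hpos : forall y, 0 < y < 1 -> Rabs (sin y) <= Rabs y).
 { intros y Hy. rewrite !Rabs_pos_eq. left; apply sin_lt_x; lra. lra. left; apply sin_gt_0; lra. }
 destruct (Rle_dec 1 (Rabs x)).
 - assert (H := SIN_bound x). apply Rle_trans with 1; auto. apply Rabs_le; lra.
 - destruct (Rtotal_order x 0) as [H|[H|H]].
   + assert (Hs : sin x = - sin (- x)) by (rewrite sin_neg; ring).
     rewrite Hs, Rabs_Ropp. rewrite <- (Rabs_Ropp x). apply Hpos.
     rewrite Rabs_left in n; lra.
   + subst. rewrite sin_0. lra.
   + apply Hpos. rewrite Rabs_pos_eq in n; lra.
Qed.

Lemma is_derive_ext_R (f g : R -> R) (x l : R) : (forall t : R, f t = g t) -> is_derive f x l -> is_derive g x l.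
Proof. apply is_derive_ext. Qed.

Lemma psi_deriv k t : 0 <= k ->
  is_derive (fun t => sin t * delta k t) t ((2 * k + 1) * delta k t * cos t).
Proof. intros Hk. destruct (Req_dec k 0) as [->|Hk0].
 - rewrite delta_k0. replace ((2*0+1)*1*cos t) with (cos t) by ring.
   apply (is_derive_ext_R sin). { intros u. rewrite delta_k0, Rmult_1_r. reflexivity. } apply is_derive_sin.
 - assert (Hk' : 0 < k) by lra.
   apply (is_derive_ext_R (fun t => sin t * exp (k * ln ((2 * sin t)^2)))).
   { intros u. destruct (Req_dec (sin u) 0) as [Hs|Hs].
     rewrite Hs, delta_zero by auto. ring. rewrite delta_exp by auto. reflexivity. }
   destruct (Req_dec (sin t) 0) as [Hs|Hs].
   + rewrite delta_zero by auto. replace ((2*k+1)*0*cos t) with 0 by ring.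
     apply is_derive_Reals. intros eps Heps.
     assert (Hc := delta_cont k t Hk). apply continuity_pt_filterlim in Hc.
     destruct (Hc eps Heps) as [alp [Halp Hd]].
     exists (mkposreal _ Halp). intros h Hh0 Hh. simpl in Hh.
     assert (Hd' := Hd (t + h)). simpl in Hd'. unfold R_dist in Hd'.
     rewrite (delta_zero k t) in Hd' by auto.
     rewrite Hs. rewrite Rmult_0_l, Rminus_0_r, Rminus_0_r.
     assert (Ht : sin (t+h) * exp (k * ln ((2 * sin (t+h))^2)) = sin (t+h) * delta k (t+h)).
     { destruct (Req_dec (sin (t+h)) 0) as [Hs'|Hs']. rewrite Hs'; ring. rewrite delta_exp by auto. auto. }
     rewrite Ht.
     assert (Hsin : Rabs (sin (t+h)) <= Rabs h).
     { rewrite sin_plus, Hs. rewrite Rmult_0_l, Rplus_0_l, Rabs_mult.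
       apply Rle_trans with (1 * Rabs (sin h)). apply Rmult_le_compat_r. apply Rabs_pos.
       apply Rabs_le. apply COS_bound. rewrite Rmult_1_l. apply abs_sin_le. }
     assert (Hdl : delta k (t+h) < eps).
     { assert (H0 : D_x no_cond t (t+h) /\ Rabs (t + h - t) < alp).
       { split. split. constructor. lra. replace (t+h-t) with h by ring. auto. }
       specialize (Hd' H0). rewrite Rminus_0_r, Rabs_pos_eq in Hd' by apply delta_nonneg. auto. }
     unfold Rdiv. rewrite Rabs_mult, Rabs_mult, Rabs_inv.
     rewrite (Rabs_pos_eq (delta k (t+h))) by apply delta_nonneg.
     apply Rle_lt_trans with (delta k (t+h)); auto.
     apply Rabs_pos_lt in Hh0.
     replace (Rabs (sin (t + h)) * delta k (t + h) * / Rabs h) with ((Rabs (sin (t + h)) / Rabs h) * delta k (t + h)) by (field; lra).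
     rewrite <- (Rmult_1_l (delta k (t+h))) at 2. apply Rmult_le_compat_r. apply delta_nonneg.
     unfold Rdiv. apply Rle_trans with (Rabs h * / Rabs h).
     apply Rmult_le_compat_r. left; apply Rinv_0_lt_compat; auto. auto. right; field; lra.
   + rewrite delta_exp by auto.
     auto_derive. apply pow2_gt_0. lra.
     replace (2 * sin t * (2 * sin t * 1)) with ((2*sin t)^2) by ring.
     field. auto.
Qed.

Definition momI (k : R) (m : Z) : R := RInt (fun t => cos (IZR m * t) * delta k t) 0 (2 * PI).

Lemma cont_trig_delta k (a : R) (tr : R -> R) t : 0 <= k -> (forall x, continuous tr x) ->
  continuous (fun t => tr (a * t) * delta k t) t.
Proof. intros Hk Htr. apply (continuous_mult (fun t => tr (a * t)) (delta k)).
 apply (continuous_comp (fun t => a * t) tr). apply (continuous_mult (fun _ => a) (fun t => t)).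
 apply continuous_const. apply continuous_id. apply Htr. apply delta_cont; auto. Qed.

Lemma ex_cos_delta k a : 0 <= k -> ex_RInt (fun t => cos (a * t) * delta k t) 0 (2*PI).
Proof. intros Hk. apply (ex_RInt_continuous (V := R_CompleteNormedModule)). intros z _. apply cont_trig_delta; auto. apply continuous_cos. Qed.

Lemma ex_sin_delta k a : 0 <= k -> ex_RInt (fun t => sin (a * t) * delta k t) 0 (2*PI).
Proof. intros Hk. apply (ex_RInt_continuous (V := R_CompleteNormedModule)). intros z _. apply cont_trig_delta; auto. apply continuous_sin. Qed.

Lemma momI_even k m : momI k (- m) = momI k m.
Proof. unfold momI. apply RInt_ext. intros x _. rewrite opp_IZR, Ropp_mult_distr_l_reverse, cos_neg. reflexivity. Qed.

Lemma sin_2PIm m : sin (IZR m * (2 * PI)) = 0.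
Proof. apply sin_eq_0_1. exists (2 * m)%Z. rewrite mult_IZR. simpl. ring. Qed.

Lemma cos_2PIm m : cos (IZR m * (2 * PI)) = 1.
Proof. replace (IZR m * (2 * PI)) with (2 * (IZR m * PI)) by ring. rewrite cos_2a_sin.
 rewrite sin_eq_0_1. ring. exists m. auto. Qed.

Lemma sin_int_zero k m : 0 <= k -> RInt (fun t => sin (IZR m * t) * delta k t) 0 (2*PI) = 0.
Proof. intros Hk. set (f := fun t => sin (IZR m * t) * delta k t).
 assert (Hex : ex_RInt f 0 (2*PI)) by (apply ex_sin_delta; auto).
 assert (H1 : is_RInt f 0 (2*PI) (RInt f 0 (2*PI))) by (apply (RInt_correct (V := R_CompleteNormedModule)); auto).
 assert (H2 : is_RInt f (-1 * 0 + 2*PI) (-1 * (2*PI) + 2*PI) (RInt f (2*PI) 0)).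
 { replace (-1 * 0 + 2*PI) with (2*PI) by ring. replace (-1 * (2*PI) + 2*PI) with 0 by ring.
   apply (RInt_correct (V := R_CompleteNormedModule)). apply ex_RInt_swap. auto. }
 apply is_RInt_comp_lin in H2.
 assert (H3 : is_RInt f 0 (2*PI) (RInt f (2*PI) 0)).
 { apply (is_RInt_ext _ _ _ _ _ (fun x _ => eq_refl) ) in H2.
   eapply is_RInt_ext; [|exact H2]. intros x _. unfold f. simpl. unfold scal; simpl. unfold mult; simpl.
   replace (-1 * x + 2*PI) with (2*PI - x) by ring. rewrite delta_sym.
   replace (IZR m * (2 * PI - x)) with (IZR m * (2*PI) - IZR m * x) by ring.
   rewrite sin_minus, sin_2PIm, cos_2PIm. ring. }
 rewrite <- (opp_RInt_swap (V := R_CompleteNormedModule)) in H3 by auto. apply (is_RInt_unique (V := R_CompleteNormedModule)) in H3.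
 assert (HI: forall x:R, x = -x -> x = 0) by (intros; lra). apply HI. exact H3.
Qed.

Lemma momI_rec k m : 0 <= k ->
  (2*k+1+IZR m) * momI k (m+1) + (2*k+1-IZR m) * momI k (m-1) = 0.
Proof. intros Hk.
 set (c1 := (2*k+1+IZR m)/2). set (c2 := (2*k+1-IZR m)/2).
 set (f1 := fun t => cos (IZR (m+1) * t) * delta k t).
 set (f2 := fun t => cos (IZR (m-1) * t) * delta k t).
 assert (A1 : is_RInt f1 0 (2*PI) (momI k (m+1))) by (apply (RInt_correct (V := R_CompleteNormedModule)), ex_cos_delta; auto).
 assert (A2 : is_RInt f2 0 (2*PI) (momI k (m-1))) by (apply (RInt_correct (V := R_CompleteNormedModule)), ex_cos_delta; auto).
 assert (A : is_RInt (fun t => plus (scal c1 (f1 t)) (scal c2 (f2 t))) 0 (2*PI)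
               (plus (scal c1 (momI k (m+1))) (scal c2 (momI k (m-1))))).
 { apply (is_RInt_plus (V := R_NormedModule)); apply (is_RInt_scal (V := R_NormedModule)); auto. }
 set (G := fun t => (sin t * delta k t) * cos (IZR m * t)).
 set (dG := fun t => ((2 * k + 1) * delta k t * cos t) * cos (IZR m * t) + (sin t * delta k t) * (- IZR m * sin (IZR m * t))).
 assert (HG : forall t, is_derive G t (dG t)).
 { intros t. assert (Hg : is_derive (fun t => cos (IZR m * t)) t (- IZR m * sin (IZR m * t))).
   { auto_derive; auto. ring. }
   assert (H := is_derive_mult (fun t => sin t * delta k t) (fun t => cos (IZR m * t)) t _ _ (psi_deriv k t Hk) Hg Rmult_comm).
   unfold G, dG. unfold plus, mult in H; simpl in H. exact H. }
 assert (B : is_RInt dG 0 (2*PI) (minus (G (2*PI)) (G 0))).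
 { apply (is_RInt_derive (V := R_CompleteNormedModule)). intros x _. apply HG.
   intros x _. unfold dG.
   apply (continuous_plus (fun t => ((2 * k + 1) * delta k t * cos t) * cos (IZR m * t))
                         (fun t => (sin t * delta k t) * (- IZR m * sin (IZR m * t)))).
   - apply (continuous_mult (fun t => ((2 * k + 1) * delta k t * cos t)) (fun t => cos (IZR m * t))).
     apply (continuous_mult (fun t => ((2 * k + 1) * delta k t)) cos).
     apply (continuous_mult (fun t => 2 * k + 1) (delta k)). apply continuous_const. apply delta_cont; auto.
     apply continuous_cos. apply continuous_cos_comp.
     apply (continuous_mult (fun _ => IZR m) (fun t => t)). apply continuous_const. apply continuous_id.
   - apply (continuous_mult (fun t => sin t * delta k t) (fun t => - IZR m * sin (IZR m * t))).
     apply (continuous_mult sin (delta k)). apply continuous_sin. apply delta_cont; auto.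
     apply (continuous_mult (fun _ => - IZR m) (fun t => sin (IZR m * t))). apply continuous_const.
     apply (continuous_comp (fun t => IZR m * t) sin).
     apply (continuous_mult (fun _ => IZR m) (fun t => t)). apply continuous_const. apply continuous_id.
     apply continuous_sin. }
 assert (HG0 : minus (G (2*PI)) (G 0) = 0).
 { unfold G, minus, plus, opp; simpl. rewrite sin_2PI, sin_0. ring. }
 rewrite HG0 in B.
 assert (B' : is_RInt (fun t => plus (scal c1 (f1 t)) (scal c2 (f2 t))) 0 (2*PI) 0).
 { eapply is_RInt_ext; [|exact B]. intros x _. unfold dG, f1, f2, c1, c2, plus, scal; simpl. unfold mult; simpl.
   rewrite plus_IZR, minus_IZR. 
   replace ((IZR m + 1) * x) with (IZR m * x + x) by ring.
   replace ((IZR m - 1) * x) with (IZR m * x - x) by ring.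
   rewrite cos_plus, cos_minus. field. }
 apply (is_RInt_unique (V := R_CompleteNormedModule)) in A.
 apply (is_RInt_unique (V := R_CompleteNormedModule)) in B'.
 rewrite A in B'. unfold plus, scal in B'; simpl in B'. unfold mult in B'; simpl in B'.
 unfold c1, c2 in B'. lra.
Qed.

Notation CV := C_R_CompleteNormedModule.

Lemma is_RInt_C (f : R -> C) a b (l1 l2 : R) :
  is_RInt (fun t => fst (f t)) a b l1 -> is_RInt (fun t => snd (f t)) a b l2 ->
  is_RInt (V := CV) f a b (l1, l2).
Proof. intros H1 H2. apply (is_RInt_fct_extend_pair f a b l1 l2 H1 H2). Qed.

Lemma is_RInt_C_fst (f : R -> C) a b l :
  is_RInt (V := CV) f a b l -> is_RInt (fun t => fst (f t)) a b (fst l).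
Proof. intros H. apply (is_RInt_fct_extend_fst f a b l H). Qed.

Lemma is_RInt_C_snd (f : R -> C) a b l :
  is_RInt (V := CV) f a b l -> is_RInt (fun t => snd (f t)) a b (snd l).
Proof. intros H. apply (is_RInt_fct_extend_snd f a b l H). Qed.

Lemma is_RInt_lin2 (f g : R -> R) a b lf lg (c d : R) :
  is_RInt f a b lf -> is_RInt g a b lg ->
  is_RInt (fun t => c * f t + d * g t) a b (c * lf + d * lg).
Proof. intros Hf Hg.
 apply (is_RInt_plus (V := R_NormedModule) (fun t => scal c (f t)) (fun t => scal d (g t)) a b (scal c lf) (scal d lg)).
 apply (is_RInt_scal (V := R_NormedModule)); auto. apply (is_RInt_scal (V := R_NormedModule)); auto. Qed.

Lemma is_RInt_Cscal (c : C) (f : R -> C) a b l :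
  is_RInt (V := CV) f a b l -> is_RInt (V := CV) (fun t => Cmult c (f t)) a b (Cmult c l).
Proof. intros H. destruct c as [c1 c2]. destruct l as [l1 l2].
 assert (H1 := is_RInt_C_fst _ _ _ _ H). assert (H2 := is_RInt_C_snd _ _ _ _ H). simpl in H1, H2.
 replace (Cmult (c1, c2) (l1, l2)) with ((c1 * l1 + - c2 * l2), (c2 * l1 + c1 * l2)) by (apply injective_projections; simpl; ring).
 apply is_RInt_C.
 - eapply is_RInt_ext; [|apply (is_RInt_lin2 _ _ _ _ _ _ c1 (- c2) H1 H2)]. intros x _. simpl. ring.
 - eapply is_RInt_ext; [|apply (is_RInt_lin2 _ _ _ _ _ _ c2 c1 H1 H2)]. intros x _. simpl. ring.
Qed.

Lemma is_RInt_Cplus (f g : R -> C) a b lf lg :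
  is_RInt (V := CV) f a b lf -> is_RInt (V := CV) g a b lg ->
  is_RInt (V := CV) (fun t => Cplus (f t) (g t)) a b (Cplus lf lg).
Proof. intros Hf Hg. apply (is_RInt_plus (V := CV) f g a b lf lg Hf Hg). Qed.

Lemma is_RInt_eq_val {V : NormedModule R_AbsRing} (f : R -> V) a b l l' : is_RInt f a b l -> l = l' -> is_RInt f a b l'.
Proof. intros H <-; exact H. Qed.

Lemma is_RInt_R0 a b : is_RInt (fun _ => 0) a b 0.
Proof. eapply is_RInt_eq_val. apply (is_RInt_const (V := R_NormedModule) a b 0).
 apply Rmult_0_r. Qed.

Lemma is_RInt_Czero a b : is_RInt (V := CV) (fun _ => RtoC 0) a b (RtoC 0).
Proof. apply is_RInt_C; simpl; apply is_RInt_R0. Qed.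

Lemma is_RInt_Csum (l : list Z) (b : Z -> C) (h : Z -> R -> C) (v : Z -> C) x y :
  (forall i, In i l -> is_RInt (V := CV) (h i) x y (v i)) ->
  is_RInt (V := CV) (fun t => Csum l (fun i => Cmult (b i) (h i t))) x y (Csum l (fun i => Cmult (b i) (v i))).
Proof. induction l as [|a l IH]; intros H.
 - apply is_RInt_Czero.
 - apply is_RInt_Cplus. apply is_RInt_Cscal. apply H. left; auto.
   apply IH. intros i Hi. apply H. right; auto.
Qed.

Lemma is_RInt_cis k m : 0 <= k ->
  is_RInt (V := CV) (fun t => Cmult (cis (IZR m * t)) (RtoC (delta k t))) 0 (2*PI) (RtoC (momI k m)).
Proof. intros Hk. apply is_RInt_C.
 - eapply is_RInt_ext; [|apply (RInt_correct (V := R_CompleteNormedModule)), ex_cos_delta; auto].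
   intros x _. simpl. ring.
 - eapply is_RInt_eq_val. eapply is_RInt_ext; [|apply (RInt_correct (V := R_CompleteNormedModule)), (ex_sin_delta k (IZR m)); auto].
   intros x _. simpl. ring. apply sin_int_zero; auto.
Qed.

Lemma cis_conj a b : Cmult (cis a) (Cconj (cis b)) = cis (a - b).
Proof. unfold cis, Cconj. apply injective_projections; simpl; rewrite ?cos_minus, ?sin_minus; ring. Qed.

Definition mu (k : R) (m : Z) : C := RtoC (momI k m / (2 * PI)).

Lemma is_RInt_mono k l (a : Z -> C) i : 0 <= k ->
  is_RInt (V := CV) (fun t => Cmult (Cmult (Csum l (fun j => Cmult (a j) (cis (IZR j * t)))) (Cconj (cis (IZR i * t)))) (RtoC (delta k t)))
    0 (2*PI) (Csum l (fun j => Cmult (a j) (RtoC (momI k (j - i))))).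
Proof. intros Hk.
 eapply is_RInt_ext; [|apply (is_RInt_Csum l a (fun j t => Cmult (cis (IZR (j - i) * t)) (RtoC (delta k t))))].
 - intros t _. cbv beta. rewrite <- !Csum_scal_r. apply Csum_ext_in. intros j _.
   rewrite minus_IZR. replace ((IZR j - IZR i) * t) with (IZR j * t - IZR i * t) by ring.
   rewrite <- cis_conj. ring.
 - intros j _. apply is_RInt_cis; auto.
Qed.

Lemma ip_mono k l (a : Z -> C) i : 0 <= k ->
  ip k (fun t => Csum l (fun j => Cmult (a j) (cis (IZR j * t)))) (fun t => cis (IZR i * t)) =
  Csum l (fun j => Cmult (a j) (mu k (j - i))).
Proof. intros Hk. unfold ip. rewrite (is_RInt_unique _ _ _ _ (is_RInt_mono k l a i Hk)).
 rewrite <- Csum_scal. apply Csum_ext_in. intros j _. unfold mu.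
 unfold Rdiv. rewrite RtoC_mult. ring. Qed.

Lemma Cconj_Csum l f : Cconj (Csum l f) = Csum l (fun j => Cconj (f j)).
Proof. induction l as [|a l IH]; simpl.
 - apply injective_projections; simpl; ring.
 - rewrite <- IH. apply injective_projections; simpl; ring. Qed.

Definition Fc (l : list Z) (f : Z -> C) (t : R) : C := Csum l (fun j => Cmult (f j) (cis (IZR j * t))).

Lemma is_RInt_self k l f : 0 <= k ->
  is_RInt (V := CV) (fun t => Cmult (Cmult (Fc l f t) (Cconj (Fc l f t))) (RtoC (delta k t))) 0 (2*PI)
    (Csum l (fun i => Cmult (Cconj (f i)) (Csum l (fun j => Cmult (f j) (RtoC (momI k (j - i))))))).
Proof. intros Hk.
 eapply is_RInt_ext; [|apply (is_RInt_Csum l (fun i => Cconj (f i))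
    (fun i t => Cmult (Cmult (Fc l f t) (Cconj (cis (IZR i * t)))) (RtoC (delta k t))))].
 - intros t _. cbv beta.
   replace (Cconj (Fc l f t)) with (Csum l (fun j => Cconj (Cmult (f j) (cis (IZR j * t))))) by (unfold Fc; symmetry; apply Cconj_Csum).
   rewrite <- Csum_scal, <- Csum_scal_r. apply Csum_ext_in. intros i _. rewrite Cmult_conj. ring.
 - intros i _. apply is_RInt_mono; auto.
Qed.

Lemma cont_fst_Fc l f t : continuous (fun t => fst (Fc l f t)) t /\ continuous (fun t => snd (Fc l f t)) t.
Proof. induction l as [|a l IH].
 - split; apply continuous_const.
 - destruct IH as [IH1 IH2]. unfold Fc in *. simpl. split.
   + apply (continuous_plus (fun t => fst (f a) * cos (IZR a * t) - snd (f a) * sin (IZR a * t))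
            (fun t => fst (Csum l (fun j => Cmult (f j) (cis (IZR j * t)))))); auto.
     apply (continuous_minus (fun t => fst (f a) * cos (IZR a * t)) (fun t => snd (f a) * sin (IZR a * t))).
     apply (continuous_mult (fun _ => fst (f a)) (fun t => cos (IZR a * t))). apply continuous_const.
     apply continuous_cos_comp. apply (continuous_mult (fun _ => IZR a) (fun t => t)). apply continuous_const. apply continuous_id.
     apply (continuous_mult (fun _ => snd (f a)) (fun t => sin (IZR a * t))). apply continuous_const.
     apply (continuous_comp (fun t => IZR a * t) sin). apply (continuous_mult (fun _ => IZR a) (fun t => t)). apply continuous_const. apply continuous_id. apply continuous_sin.
   + apply (continuous_plus (fun t => fst (f a) * sin (IZR a * t) + snd (f a) * cos (IZR a * t))
            (fun t => snd (Csum l (fun j => Cmult (f j) (cis (IZR j * t)))))); auto.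
     apply (continuous_plus (fun t => fst (f a) * sin (IZR a * t)) (fun t => snd (f a) * cos (IZR a * t))).
     apply (continuous_mult (fun _ => fst (f a)) (fun t => sin (IZR a * t))). apply continuous_const.
     apply (continuous_comp (fun t => IZR a * t) sin). apply (continuous_mult (fun _ => IZR a) (fun t => t)). apply continuous_const. apply continuous_id. apply continuous_sin.
     apply (continuous_mult (fun _ => snd (f a)) (fun t => cos (IZR a * t))). apply continuous_const.
     apply continuous_cos_comp. apply (continuous_mult (fun _ => IZR a) (fun t => t)). apply continuous_const. apply continuous_id.
Qed.

Lemma zero_of_int (q : R -> R) a b : a < b -> (forall t, a <= t <= b -> continuous q t) ->
  (forall t, a < t < b -> 0 <= q t) -> is_RInt q a b 0 -> forall t, a < t < b -> q t = 0.
Proof. intros Hab Hc Hpos HI t0 Ht0.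
 destruct (Rle_lt_or_eq_dec 0 (q t0) (Hpos t0 Ht0)) as [Hq|Hq]; [|auto].
 exfalso.
 assert (Hct := Hc t0 ltac:(lra)). apply continuity_pt_filterlim in Hct.
 destruct (Hct (q t0 / 2) ltac:(lra)) as [eta [Heta Hd]].
 set (e := Rmin (eta / 2) (Rmin ((t0 - a) / 2) ((b - t0) / 2))).
 assert (He : 0 < e). { unfold e. repeat apply Rmin_pos; lra. }
 assert (He1 : e <= eta / 2) by apply Rmin_l.
 assert (He2 : e <= (t0 - a) / 2) by (eapply Rle_trans; [apply Rmin_r|apply Rmin_l]).
 assert (He3 : e <= (b - t0) / 2) by (eapply Rle_trans; [apply Rmin_r|apply Rmin_r]).
 assert (Hex : forall u v, a <= u -> u <= v -> v <= b -> ex_RInt q u v).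
 { intros u v H1 H2 H3. apply (ex_RInt_continuous (V := R_CompleteNormedModule)). intros z Hz.
   apply Hc. rewrite Rmin_left in Hz by lra. rewrite Rmax_right in Hz by lra. lra. }
 assert (I1 : 0 <= RInt q a (t0 - e)) by (apply RInt_ge_0; [lra| apply Hex; lra| intros; apply Hpos; lra]).
 assert (I3 : 0 <= RInt q (t0 + e) b) by (apply RInt_ge_0; [lra| apply Hex; lra| intros; apply Hpos; lra]).
 assert (I2 : 0 < RInt q (t0 - e) (t0 + e)).
 { apply RInt_gt_0. lra.
   - intros x Hx. destruct (Req_dec x t0) as [->|Hxt]. auto.
     assert (H := Hd x). simpl in H. unfold R_dist in H.
     assert (H' : Rabs (q x - q t0) < q t0 / 2). { apply H. split. split. constructor. auto.
       apply Rabs_def1; lra. }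
     apply Rabs_def2 in H'. lra.
   - intros x Hx. apply Hc. lra. }
 assert (E1 := RInt_Chasles (V := R_CompleteNormedModule) q a (t0 - e) (t0 + e) ltac:(apply Hex; lra) ltac:(apply Hex; lra)).
 assert (E2 := RInt_Chasles (V := R_CompleteNormedModule) q a (t0 + e) b ltac:(apply Hex; lra) ltac:(apply Hex; lra)).
 apply (is_RInt_unique (V := R_CompleteNormedModule)) in HI.
 unfold plus in E1, E2; simpl in E1, E2.
 assert (HI' : RInt q a b = 0) by exact HI.
 assert (E1' : RInt q a (t0 - e) + RInt q (t0 - e) (t0 + e) = RInt q a (t0 + e)) by exact E1.
 assert (E2' : RInt q a (t0 + e) + RInt q (t0 + e) b = RInt q a b) by exact E2.
 lra.
Qed.

Lemma momI_0 m : momI 0 m = if Z.eq_dec m 0 then 2 * PI else 0.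
Proof. unfold momI. destruct (Z.eq_dec m 0) as [->|Hm].
 - rewrite (RInt_ext _ (fun _ => 1)). rewrite (RInt_const (V := R_CompleteNormedModule)).
   unfold scal; simpl. unfold mult; simpl. ring.
   intros x _. rewrite delta_k0. simpl. rewrite Rmult_0_l, cos_0. ring.
 - apply (is_RInt_unique (V := R_CompleteNormedModule)).
   assert (Hm' : IZR m <> 0) by (apply not_0_IZR; auto).
   eapply is_RInt_eq_val.
   + apply (is_RInt_derive (V := R_CompleteNormedModule) (fun t => sin (IZR m * t) / IZR m)).
     * intros x _. auto_derive; auto. rewrite delta_k0. field. auto.
     * intros x _. apply (continuous_mult (fun t => cos (IZR m * t)) (delta 0)).
       apply continuous_cos_comp. apply (continuous_mult (fun _ => IZR m) (fun t => t)). apply continuous_const. apply continuous_id.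
       apply delta_cont; lra.
   + unfold minus, plus, opp; simpl. rewrite sin_2PIm, Rmult_0_r, sin_0. field. auto.
Qed.

Lemma sin_nz t : 0 < t < 2 * PI -> t <> PI -> sin t <> 0.
Proof. intros H1 H2. destruct (Rlt_or_le t PI).
 - apply Rgt_not_eq. apply sin_gt_0; lra.
 - apply Rlt_not_eq. apply sin_lt_0; lra. Qed.

Lemma Cz (z w : C) : Cmult (Cmult (RtoC 0) z) w = RtoC 0.
Proof. ring. Qed.

Lemma posit k l f : 0 <= k -> NoDup l ->
  (forall i, In i l -> f i = RtoC 0 \/ Csum l (fun j => Cmult (f j) (mu k (j - i))) = RtoC 0) ->
  forall i, In i l -> f i = RtoC 0.
Proof.
 intros Hk Hnd H.
 assert (HS : is_RInt (V := CV) (fun t => Cmult (Cmult (Fc l f t) (Cconj (Fc l f t))) (RtoC (delta k t))) 0 (2*PI) (RtoC 0)).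
 { eapply is_RInt_eq_val. apply is_RInt_self; auto. apply Csum_zero. intros i Hi.
   destruct (H i Hi) as [H0|H0].
   - rewrite H0. apply injective_projections; simpl; ring.
   - replace (Csum l (fun j => Cmult (f j) (RtoC (momI k (j - i)))))
       with (Cmult (RtoC (2*PI)) (Csum l (fun j => Cmult (f j) (mu k (j - i))))).
     rewrite H0. ring.
     rewrite <- Csum_scal. apply Csum_ext_in. intros j _. unfold mu.
     replace (RtoC (momI k (j - i))) with (Cmult (RtoC (2*PI)) (RtoC (momI k (j - i) / (2 * PI)))). ring.
     rewrite <- RtoC_mult. f_equal. field. apply PI_neq0. }
 set (q := fun t => (fst (Fc l f t) ^ 2 + snd (Fc l f t) ^ 2) * delta k t).
 assert (Hq : is_RInt q 0 (2*PI) 0).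
 { apply is_RInt_C_fst in HS. simpl in HS. eapply is_RInt_ext; [|exact HS].
   intros x _. unfold q. destruct (Fc l f x) as [u v]. simpl. ring. }
 assert (Hq0 : forall t, 0 < t < 2*PI -> q t = 0).
 { apply zero_of_int; auto.
   - apply Rgt_2PI_0.
   - intros t _. destruct (cont_fst_Fc l f t) as [C1 C2]. unfold q.
     apply (continuous_mult (fun t => fst (Fc l f t) ^ 2 + snd (Fc l f t) ^ 2) (delta k)).
     apply (continuous_plus (fun t => fst (Fc l f t) ^ 2) (fun t => snd (Fc l f t) ^ 2)).
     apply (continuous_comp (fun t => fst (Fc l f t)) (fun x => x ^ 2)); auto.
     apply continuity_pt_filterlim. apply derivable_continuous_pt. apply derivable_pt_pow.
     apply (continuous_comp (fun t => snd (Fc l f t)) (fun x => x ^ 2)); auto.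
     apply continuity_pt_filterlim. apply derivable_continuous_pt. apply derivable_pt_pow.
     apply delta_cont; auto.
   - intros t _. unfold q. apply Rmult_le_pos. nra. apply delta_nonneg. }
 assert (HF : forall t, 0 < t < 2 * PI -> t <> PI -> Fc l f t = RtoC 0).
 { intros t Ht Htp. assert (Hd := delta_pos k t (sin_nz t Ht Htp)).
   assert (H0 := Hq0 t Ht). unfold q in H0.
   assert (H1 : fst (Fc l f t) ^ 2 + snd (Fc l f t) ^ 2 = 0).
   { apply Rmult_eq_reg_r with (delta k t). rewrite H0. ring. lra. }
   destruct (Fc l f t) as [u v]. simpl in H1. apply injective_projections; simpl; nra. }
 intros i Hi.
 assert (HM := is_RInt_mono 0 l f i (Rle_refl 0)).
 set (g := fun t => Cmult (Cmult (Csum l (fun j => Cmult (f j) (cis (IZR j * t)))) (Cconj (cis (IZR i * t)))) (RtoC (delta 0 t))) in HM.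
 assert (HZ1 : is_RInt (V := CV) g 0 PI (RtoC 0)).
 { eapply is_RInt_ext; [|apply is_RInt_Czero]. intros x Hx. rewrite Rmin_left, Rmax_right in Hx by (assert (PI > 0) by apply PI_RGT_0; lra).
   unfold g. fold (Fc l f x). rewrite HF. symmetry. apply Cz. assert (PI > 0) by apply PI_RGT_0; lra. lra. }
 assert (HZ2 : is_RInt (V := CV) g PI (2*PI) (RtoC 0)).
 { eapply is_RInt_ext; [|apply is_RInt_Czero]. intros x Hx. rewrite Rmin_left, Rmax_right in Hx by (assert (PI > 0) by apply PI_RGT_0; lra).
   unfold g. fold (Fc l f x). rewrite HF. symmetry. apply Cz. assert (PI > 0) by apply PI_RGT_0; lra. lra. }
 assert (HZ := is_RInt_Chasles _ _ _ _ _ _ HZ1 HZ2).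
 apply (is_RInt_unique (V := CV)) in HZ. apply (is_RInt_unique (V := CV)) in HM.
 rewrite HM in HZ.
 rewrite (Csum_single l _ i Hnd Hi) in HZ.
 - rewrite momI_0 in HZ. replace (i - i)%Z with 0%Z in HZ by lia. simpl in HZ.
   assert (H2 : Cmult (f i) (RtoC (2 * PI)) = RtoC 0).
   { rewrite HZ. apply injective_projections; simpl; unfold plus; simpl; apply Rplus_0_r. }
   assert (Hc : Cmult (RtoC (2*PI)) (RtoC (/(2*PI))) = RtoC 1) by (rewrite <- RtoC_mult; f_equal; field; apply PI_neq0).
   transitivity (Cmult (Cmult (f i) (RtoC (2*PI))) (RtoC (/(2*PI)))).
   rewrite <- Cmult_assoc, Hc. ring. rewrite H2. ring.
 - intros j _ Hj. rewrite momI_0. destruct (Z.eq_dec (j - i) 0). lia. apply injective_projections; simpl; ring.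
Qed.

Lemma mu_even_k k m : mu k (- m) = mu k m.
Proof. unfold mu. rewrite momI_even. reflexivity. Qed.

Lemma mu_rec_k k : 0 <= k -> forall m,
  Cplus (Cmult (RtoC (2*k+1+IZR m)) (mu k (m+1)%Z)) (Cmult (RtoC (2*k+1-IZR m)) (mu k (m-1)%Z)) = RtoC 0.
Proof. intros Hk m. unfold mu. rewrite <- !RtoC_mult, <- RtoC_plus. f_equal.
 assert (H := momI_rec k m Hk). unfold Rdiv.
 replace ((2 * k + 1 + IZR m) * (momI k (m + 1) * / (2 * PI)) + (2 * k + 1 - IZR m) * (momI k (m - 1) * / (2 * PI)))
   with (((2*k+1+IZR m) * momI k (m+1) + (2*k+1-IZR m) * momI k (m-1)) * / (2*PI)) by ring.
 rewrite H. ring. Qed.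

Ltac modf5 := repeat match goal with
 | H : context [(?e mod 2)%Z] |- _ =>
   let r := fresh "r" in let q := fresh "q" in
   pose proof (Z.div_mod e 2 ltac:(lia)) ; pose proof (Z.mod_pos_bound e 2 ltac:(lia));
   set (r := (e mod 2)%Z) in *; set (q := (e / 2)%Z) in *; clearbody r q
 end.

Ltac zb5 := repeat match goal with
 | |- context [Z.eqb ?a ?b] => destruct (Z.eqb_spec a b)
 | |- context [Z.ltb ?a ?b] => destruct (Z.ltb_spec a b)
 | |- context [Z.leb ?a ?b] => destruct (Z.leb_spec a b)
 end; cbn [andb orb negb]; try (modf5; lia); try reflexivity.

Lemma tri_pos n j : (0 < n)%Z -> tri j n = inW n j.
Proof. intros Hn. unfold tri, inW. rewrite Zeven_mod. zb5. Qed.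

Lemma tri_neg n j : (0 < n)%Z -> tri j (- n) = inW n j || (j =? n)%Z.
Proof. intros Hn. unfold tri, inW. rewrite Zeven_mod. zb5. Qed.

Lemma repr n n0 (p : Z -> bool) (c b : Z -> C) : In n0 (rng n) -> p n0 = false ->
  Cplus (b n0) (Csum (filter p (rng n)) (fun j => Cmult (c j) (b j))) =
  Csum (rng n) (fun j => Cmult (if (j =? n0)%Z then RtoC 1 else if p j then c j else RtoC 0) (b j)).
Proof. intros Hin Hp. rewrite Csum_filter.
 transitivity (Csum (rng n) (fun j => Cplus (if (j =? n0)%Z then b j else RtoC 0) (if p j then Cmult (c j) (b j) else RtoC 0))).
 - rewrite Csum_plus. f_equal. rewrite (Csum_single _ _ n0). rewrite Z.eqb_refl. reflexivity.
   apply nodup_rng. auto. intros j _ Hj. destruct (Z.eqb_spec j n0); [lia|reflexivity].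
 - apply Csum_ext_in. intros j _.
   destruct (Z.eqb_spec j n0). subst. rewrite Hp. ring. destruct (p j); ring.
Qed.

Theorem mainTheorem4 (k : R) (n : Z) (E Em : R -> C) :
  0 <= k -> (0 <= n)%Z -> 0 < IZR n + k ->
  IsHO k n E -> IsHO k (- n) Em ->
  forall x : R,
    Cmult (RtoC (1 - k ^ 2 / (IZR n + k) ^ 2)) (E x)
    = Cminus (Em (- x)) (Cmult (RtoC (k / (IZR n + k))) (Em x)).
Proof.
 intros Hk Hn Hnk [c [HE Ho]] [cm [HEm Hom]] x.
 destruct (Z.eq_dec n 0) as [->|Hn0].
 - assert (Hb : below 0 = nil) by reflexivity.
   change (- 0)%Z with 0%Z in HEm. rewrite HE, (HEm (-x)), (HEm x). rewrite Hb. unfold Csum. cbn [fold_right].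
   rewrite !Rmult_0_l, exp_0. simpl in Hnk.
   replace (1 - k^2 / (0 + k)^2) with 0 by (field; lra).
   replace (k / (0 + k)) with 1 by (field; lra).
   ring.
 - assert (Hnp : (0 < n)%Z) by lia.
   set (R := rng n).
   set (e := fun j => if (j =? n)%Z then RtoC 1 else if tri j n then c j else RtoC 0).
   set (em := fun j => if (j =? - n)%Z then RtoC 1 else if tri j (- n) then cm j else RtoC 0).
   assert (HnR : In n R) by (apply in_rng; lia).
   assert (HmnR : In (- n)%Z R) by (apply in_rng; lia).
   assert (Htnn : tri n n = false) by (rewrite tri_pos by auto; unfold inW; zb5).
   assert (Htmm : tri (- n) (- n) = false) by (rewrite tri_neg by auto; unfold inW; zb5).
   assert (HEx : forall y, E y = Csum R (fun j => Cmult (e j) (RtoC (exp (IZR j * y))))).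
   { intros y. rewrite HE, below_eq. apply (repr n n (fun j => tri j n) c (fun j => RtoC (exp (IZR j * y)))); auto. }
   assert (HEmx : forall y, Em y = Csum R (fun j => Cmult (em j) (RtoC (exp (IZR j * y))))).
   { intros y. rewrite HEm, below_eq, rng_opp. apply (repr n (-n) (fun j => tri j (-n)) cm (fun j => RtoC (exp (IZR j * y)))); auto. }
   assert (Hft : (fun t => Cplus (cis (IZR n * t)) (Csum (below n) (fun l => Cmult (c l) (cis (IZR l * t)))))
                 = (fun t => Csum R (fun j => Cmult (e j) (cis (IZR j * t))))).
   { apply functional_extensionality. intros t. rewrite below_eq.
     apply (repr n n (fun j => tri j n) c (fun j => cis (IZR j * t))); auto. }
   assert (Hftm : (fun t => Cplus (cis (IZR (-n) * t)) (Csum (below (-n)) (fun l => Cmult (cm l) (cis (IZR l * t)))))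
                 = (fun t => Csum R (fun j => Cmult (em j) (cis (IZR j * t))))).
   { apply functional_extensionality. intros t. rewrite below_eq, rng_opp.
     apply (repr n (-n) (fun j => tri j (-n)) cm (fun j => cis (IZR j * t))); auto. }
   rewrite Hft in Ho. rewrite Hftm in Hom.
   set (mk := mu k).
   assert (HB : forall i, In i R -> inW n i = true -> Bd mk n e i = RtoC 0).
   { intros i Hi Hw. rewrite <- (Ho i). unfold Bd. rewrite ip_mono by auto. reflexivity.
     rewrite tri_pos; auto. }
   assert (HBm : forall i, In i R -> (inW n i = true \/ i = n) -> Bd mk n em i = RtoC 0).
   { intros i Hi Hw. rewrite <- (Hom i). unfold Bd. rewrite ip_mono by auto. reflexivity.
     rewrite tri_neg by auto. destruct Hw as [-> | ->]. reflexivity. rewrite Z.eqb_refl. apply Bool.orb_true_r. }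
   assert (Hkey := key k mk (mu_even_k k) (mu_rec_k k Hk) n Hnp Hk e).
   set (a := RtoC (k / (IZR n + k))) in *.
   set (g := fun j => Cplus (e (- j)%Z) (Cmult a (e j))) in *.
   assert (Hg : forall i, In i R -> (inW n i = true \/ i = n) -> Bd mk n g i = RtoC 0).
   { apply Hkey.
     - unfold e. rewrite Z.eqb_refl. reflexivity.
     - intros j _ Hj Hw. unfold e. destruct (Z.eqb_spec j n); [lia|]. rewrite tri_pos, Hw by auto. reflexivity.
     - intros i Hi Hw. apply HB; auto. }
   set (f := fun j => Cplus (g j) (Cmult (RtoC (-1)) (em j))).
   assert (Hf0 : forall j, In j R -> f j = RtoC 0).
   { apply (posit k R f Hk (nodup_rng n)).
     intros i Hi. destruct (inW n i || (i =? n)%Z) eqn:Hw.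
     - right. change (Bd mk n f i = RtoC 0). unfold f. rewrite Bd_lin.
       rewrite Hg, HBm; auto. ring.
       apply Bool.orb_true_iff in Hw. destruct Hw as [Hw|Hw]; auto. apply Z.eqb_eq in Hw; auto.
       apply Bool.orb_true_iff in Hw. destruct Hw as [Hw|Hw]; auto. apply Z.eqb_eq in Hw; auto.
     - left. apply Bool.orb_false_iff in Hw. destruct Hw as [Hw1 Hw2]. apply Z.eqb_neq in Hw2.
       unfold f, g, e, em. 
       assert (Hw3 : inW n (- i) = false) by (rewrite inW_opp; auto).
       rewrite (tri_pos n (-i)), (tri_pos n i), (tri_neg n i), Hw1, Hw3 by auto.
       destruct (Z.eqb_spec (-i) n); destruct (Z.eqb_spec i n); destruct (Z.eqb_spec i (-n)); try lia.
       all: cbn [orb]; ring. }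
   assert (Hemg : forall j, In j R -> em j = g j).
   { intros j Hj. assert (H := Hf0 j Hj). unfold f in H.
     apply (lc2 _ _ _ (RtoC (-1)) H). ring. }
   assert (HEmg : forall y, Em y = Cplus (E (- y)) (Cmult a (E y))).
   { intros y. rewrite HEmx, (HEx (-y)), (HEx y).
     transitivity (Csum R (fun j => Cmult (g j) (RtoC (exp (IZR j * y))))).
     { apply Csum_ext_in. intros j Hj. rewrite Hemg; auto. }
     unfold g. 
     transitivity (Cplus (Csum R (fun j => Cmult (e (- j)%Z) (RtoC (exp (IZR j * y))))) (Cmult a (Csum R (fun j => Cmult (e j) (RtoC (exp (IZR j * y))))))).
     { rewrite <- Csum_scal, <- Csum_plus. apply Csum_ext_in. intros j _. ring. }
     f_equal. unfold R. rewrite <- (Csum_reflect n (fun j => Cmult (e j) (RtoC (exp (IZR j * - y))))).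
     apply Csum_ext_in. intros j _. rewrite opp_IZR. do 3 f_equal. ring. }
   rewrite (HEmg (-x)), (HEmg x), Ropp_involutive.
   assert (Ha : RtoC (1 - k ^ 2 / (IZR n + k) ^ 2) = Cminus (RtoC 1) (Cmult a a)).
   { unfold a. rewrite <- RtoC_mult, <- RtoC_minus. f_equal. field. lra. }
   rewrite Ha. ring.
Qed.
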